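(* Let $\sigma=\{\sigma_z\}_{z\in\mathbb{Z}}$ be i.i.d. strictly positive random variables with law $\mathbf{P}$, with $L(x):=1/\mathbf{P}(\sigma_0>x)$ slowly varying at infinity (i.e. $\lim_{u\to\infty}L(uv)/L(u)=1$ for every $v>0$). Let $h_t$ be any function with $h_t\to\infty$, $h_t^2=o(r_t)$, and such that, for all sufficiently large $t$, \[ L(\ell_t/h_t^3)>L(\ell_t)(1-1/h_t)\quad\text{and}\quad L(\ell_th_t^3)<L(\ell_t)(1+1/h_t).\] Then $\mathbf{P}(\mathcal{B}^h_t)\to1$ as $t\to\infty$, where $\mathcal{B}^h_t:=\{m_t>th_t^2/r_t\}$.
   Context: $\ell_t:=\min\{s\ge0: sL(s)\ge t\}$, $r_t:=L(\ell_t)$, $Z^{(1)}_t:=\min\{z\in\mathbb{Z}^+:\sigma_z>\ell_t\}$, $Z^{(2)}_t:=\max\{z\in\mathbb{Z}^-:\sigma_z>\ell_t\}$ (with $\mathbb{Z}^+$ the positive and $\mathbb{Z}^-$ the non-positive integers), $\Gamma_t:=\{Z^{(1)}_t,Z^{(2)}_t\}$ and $m_t:=\min_{z\in\Gamma_t}\sigma_z$. *)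

(* Defs.v *)
From HB Require Import structures.
From mathcomp Require Import all_boot all_order all_algebra.
From mathcomp Require Import all_classical all_reals all_analysis.
Set Implicit Arguments. Unset Strict Implicit. Unset Printing Implicit Defensive.
Import Order.TTheory GRing.Theory Num.Theory.
Import numFieldNormedType.Exports.
Local Open Scope classical_set_scope.
Local Open Scope ring_scope.

Section Defs.
Context {d : measure_display} {Omega : measurableType d} {R : realType}
  {P : probability Omega R}.

Definition mutually_independent (X : int -> {RV P >-> R}) : Prop :=
  forall (s : seq int) (B : int -> set R),
    uniq s -> (forall i, measurable (B i)) ->
    P (\big[setI/setT]_(i <- s) (X i @^-1` B i)) =
    (\prod_(i <- s) P (X i @^-1` B i))%E.

Definition identically_distributed (X : int -> {RV P >-> R}) : Prop :=
  forall (z : int) (B : set R), measurable B ->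
    P (X z @^-1` B) = P (X 0 @^-1` B).

Definition pos_as (X : int -> {RV P >-> R}) : Prop :=
  forall z : int, P [set w | X z w <= 0] = 0%E.

Definition Ltail (X : int -> {RV P >-> R}) (x : R) : R :=
  (fine (P [set w | x < X 0 w]))^-1.

Definition slowly_varying (L : R -> R) : Prop :=
  forall v : R, 0 < v -> (fun u => L (u * v) / L u) @ +oo --> (1 : R).

(* ell_t := min { s >= 0 : s L(s) >= t } (the minimum exists; we take the inf) *)
Definition ell (L : R -> R) (t : R) : R :=
  inf [set s : R | 0 <= s /\ t <= s * L s].

Definition rfun (L : R -> R) (t : R) : R := L (ell L t).

Definition isZ1 (X : int -> {RV P >-> R}) (t : R) (w : Omega) (z : int) : Prop :=
  (0 < z)%R /\ ell (Ltail X) t < X z w /\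
  (forall y : int, (0 < y)%R -> (y < z)%R -> X y w <= ell (Ltail X) t).

Definition isZ2 (X : int -> {RV P >-> R}) (t : R) (w : Omega) (z : int) : Prop :=
  (z <= 0)%R /\ ell (Ltail X) t < X z w /\
  (forall y : int, (z < y)%R -> (y <= 0)%R -> X y w <= ell (Ltail X) t).

(* B^h_t := { m_t > t h_t^2 / r_t },  m_t := min(sigma_{Z1}, sigma_{Z2}) *)
Definition eventB (X : int -> {RV P >-> R}) (h : R -> R) (t : R) : set Omega :=
  [set w | exists z1 z2 : int, isZ1 X t w z1 /\ isZ2 X t w z2 /\
     t * h t ^+ 2 / rfun (Ltail X) t < Num.min (X z1 w) (X z2 w)].

End Defs.

(* Main.v *)
From HB Require Import structures.
From mathcomp Require Import all_boot all_order all_algebra.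
From mathcomp Require Import all_classical all_reals all_analysis.
Require Import Defs.
From mathcomp Require Import ring lra zify.
Set Implicit Arguments. Unset Strict Implicit. Unset Printing Implicit Defensive.
Import Order.TTheory GRing.Theory Num.Theory.
Import numFieldNormedType.Exports.
Local Open Scope classical_set_scope.
Local Open Scope ring_scope.

Section S.
Context d (Omega : measurableType d) (R : realType) (P : probability Omega R)
  (sigma : int -> {RV P >-> R}).

Lemma mgt (a : R) : measurable [set y : R | a < y].
Proof.
have -> : [set y : R | a < y] = `]a, +oo[%classic.
  by apply/seteqP; split => y /=; rewrite in_itv /= andbT.
exact: measurable_itv.
Qed.
Lemma mle (a : R) : measurable [set y : R | y <= a].
Proof.
have -> : [set y : R | y <= a] = `]-oo, a]%classic.
  by apply/seteqP; split => y /=; rewrite in_itv /=.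
exact: measurable_itv.
Qed.

Lemma msgt z a : measurable [set w | a < sigma z w].
Proof. by have := @measurable_funP _ _ _ _ setT (sigma z) measurableT _ (mgt a); rewrite setTI. Qed.
Lemma msle z a : measurable [set w | sigma z w <= a].
Proof. by have := @measurable_funP _ _ _ _ setT (sigma z) measurableT _ (mle a); rewrite setTI. Qed.

Lemma PE A : measurable A -> P A = (fine (P A))%:E.
Proof. by move=> mA; rewrite fineK // fin_num_measure. Qed.
Lemma Pge0 A : 0 <= fine (P A).
Proof. by apply: fine_ge0; apply: measure_ge0. Qed.
Lemma Ple1 A : measurable A -> fine (P A) <= 1.
Proof. by move=> mA; rewrite -lee_fin -PE //; exact: probability_le1. Qed.
Lemma Ple A B : measurable A -> measurable B -> A `<=` B -> fine (P A) <= fine (P B).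
Proof.
move=> mA mB AB; rewrite -lee_fin -!PE //.
by apply: le_measure => //; rewrite inE.
Qed.

Definition G x := fine (P [set w | x < sigma 0 w]).

Lemma G_anti x y : x <= y -> G y <= G x.
Proof. by move=> xy; apply: Ple; [exact: msgt|exact: msgt|move=> w /=; apply: le_lt_trans]. Qed.

Lemma LtailE x : Ltail sigma x = (G x)^-1.
Proof. by []. Qed.

Lemma G_pos : slowly_varying (Ltail sigma) -> forall x, 0 < G x.
Proof.
move=> sv x; rewrite lt_neqAle Pge0 andbT; apply/negP => /eqP Gx0.
have := sv 2 (ltr0Sn _ 1) => /cvgrPdist_lt /(_ (1/2)) /(_ (divr_gt0 ltr01 (ltr0Sn _ 1))) H.
have H2 := nbhs_pinfty_gt (num_real (Num.max x 0)).
have [u [Hu1 Hu2]] := filter_ex (filterI H H2).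
move: Hu2; rewrite gt_max => /andP [xu u0].
have G0 y : x <= y -> G y = 0.
  by move=> xy; apply/eqP; rewrite eq_le Pge0 andbT Gx0; apply: G_anti.
move: Hu1; rewrite !LtailE (G0 u); last by rewrite ltW.

rewrite G0; last by lra.
rewrite invr0 mul0r subr0 normr1; lra.
Qed.

Section L.
Variable sv : slowly_varying (Ltail sigma).
Local Notation L := (Ltail sigma).

Lemma L_pos x : 0 < L x.
Proof. by rewrite LtailE invr_gt0 G_pos. Qed.
Lemma L_ge1 x : 1 <= L x.
Proof. by rewrite LtailE invf_ge1 ?G_pos //; apply: Ple1; exact: msgt. Qed.
Lemma L_mono x y : x <= y -> L x <= L y.
Proof. by move=> xy; rewrite !LtailE lef_pV2 ?posrE ?G_pos //; apply: G_anti. Qed.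

Definition Sset t := [set s : R | 0 <= s /\ t <= s * L s].

Lemma Sne t : 0 < t -> Sset t !=set0.
Proof.
move=> t0; exists t; split; first exact: ltW.
by rewrite ler_peMr ?L_ge1 // ltW.
Qed.

Lemma ell_ge0 t : 0 < t -> 0 <= ell L t.
Proof. by move=> t0; apply: lb_le_inf; [exact: Sne| move=> s []]. Qed.

Lemma ell_above t a : 0 < t -> ell L t < a -> t <= a * L a.
Proof.
move=> t0 lta; have [y [y0 ty] ya] := inf_lt (Sne t0) lta.
apply: (le_trans ty); apply: ler_pM => //.
- exact: ltW (L_pos y).
- exact: ltW.
- by apply: L_mono; exact: ltW.
Qed.

Lemma ell_gt0 t : 0 < t -> 0 < ell L t.
Proof.
move=> t0; rewrite lt_neqAle ell_ge0 // andbT; apply/negP => /eqP e0.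
set a := Num.min 1 (t / (2 * L 1)).
have L10 := L_pos 1.
have a0 : 0 < a by rewrite lt_min ltr01 /= divr_gt0 // mulr_gt0.
have := ell_above t0 (_ : ell L t < a); rewrite -e0 => /(_ a0) ta.
have h1 : L a <= L 1 by apply: L_mono; rewrite ge_min lexx.
have h2 : a <= t / (2 * L 1) by rewrite ge_min lexx orbT.
have h3 : a * L a <= t / (2 * L 1) * L 1.
  by apply: ler_pM => //; [exact: ltW | exact: ltW (L_pos a)].
have : t / (2 * L 1) * L 1 = t / 2 by field; rewrite gt_eqF.
lra.
Qed.
End L.

Section Indep.
Variable indep : mutually_independent sigma.
Variable ident : identically_distributed sigma.

Definition pp a := fine (P [set w | sigma 0 w <= a]).
Definition Bs (z0 : int) a b (z : int) : set R :=
  if z == z0 then [set y | b < y] else [set y | y <= a].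
Definition Fn (g : nat -> int) a b n :=
  \big[setI/setT]_(z <- map g (iota 0 n.+1)) (sigma z @^-1` Bs (g n) a b z).

Lemma bigI_mem (s : seq int) (F : int -> set Omega) w :
  (\big[setI/setT]_(i <- s) F i) w <-> (forall i, i \in s -> F i w).
Proof.
elim: s => [|x s IH]; rewrite ?big_nil ?big_cons; first by split.
split.
- move=> [Fx /IH H] i; rewrite inE => /orP [/eqP -> //|]; exact: H.
- move=> H; split; first by apply: H; rewrite inE eqxx.
  by apply/IH => i iis; apply: H; rewrite inE iis orbT.
Qed.

Lemma mBs z0 a b z : measurable (Bs z0 a b z).
Proof. by rewrite /Bs; case: ifP => _; [exact: mgt | exact: mle]. Qed.

Lemma mFn g a b n : measurable (Fn g a b n).
Proof.
apply: bigsetI_measurable => z _.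
by have := @measurable_funP _ _ _ _ setT (sigma z) measurableT _ (mBs (g n) a b z); rewrite setTI.
Qed.

Lemma PFn g (ginj : injective g) a b n : P (Fn g a b n) = ((pp a) ^+ n * G b)%:E.
Proof.
rewrite /Fn indep; last 2 first.
- by rewrite map_inj_uniq // iota_uniq.
- by move=> i; exact: mBs.
rewrite big_map (eq_bigr (fun i => (if i == n then G b else pp a)%:E)).
  rewrite prodEFin; congr EFin.
  rewrite -/(index_iota 0 n.+1) big_nat_recr //= eqxx.
  rewrite (eq_big_nat _ _ (F2 := fun=> pp a)); last first.
    by move=> i /andP [_ lt]; rewrite ltn_eqF.
  by rewrite prodr_const_nat subn0.
move=> i _; rewrite ident; last exact: mBs.
rewrite /Bs (inj_eq ginj); case: eqP => _.
- exact: (PE (msgt 0 b)).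
- exact: (PE (msle 0 a)).
Qed.

Lemma Fn_mem g (ginj : injective g) a b n w : Fn g a b n w ->
  b < sigma (g n) w /\ forall i, (i < n)%N -> sigma (g i) w <= a.
Proof.
move/bigI_mem => H; split.
- have hn : g n \in map g (iota 0 n.+1).
    by apply: map_f; rewrite mem_iota add0n ltnS leqnn.
  by have := H (g n) hn; rewrite /Bs eqxx.
- move=> i lt.
  have hi : g i \in map g (iota 0 n.+1).
    by apply: map_f; rewrite mem_iota add0n ltnS (ltnW lt).
  by have := H (g i) hi; rewrite /Bs (inj_eq ginj) (ltn_eqF lt).
Qed.

Lemma Fn_triv g (ginj : injective g) a b : a < b -> trivIset setT (Fn g a b).
Proof.
move=> ab.
have key n m w : (n < m)%N -> Fn g a b n w -> Fn g a b m w -> False.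
  move=> nm /(Fn_mem ginj) [H1 _] /(Fn_mem ginj) [_ /(_ n nm) H2].
  by move: (lt_le_trans (lt_trans ab H1) H2); rewrite ltxx.
move=> n m _ _ [w [Hn Hm]]; case: (ltngtP n m) => // nm.
- by case: (key _ _ _ nm Hn Hm).
- by case: (key _ _ _ nm Hm Hn).
Qed.

Lemma PU g (ginj : injective g) a b N : a < b ->
  P (\big[setU/set0]_(n < N) Fn g a b n) = (\sum_(n < N) (pp a) ^+ n * G b)%:E.
Proof.
move=> ab; rewrite measure_bigsetU //; last exact: Fn_triv.
  rewrite -sumEFin; apply: eq_bigr => n _; exact: PFn.
by move=> i; exact: mFn.
Qed.

Lemma ppE a : pp a = 1 - G a.
Proof.
have E : [set w | sigma 0 w <= a] = ~` [set w | a < sigma 0 w].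
  apply/seteqP; split => w.
  - rewrite /setC /= => H1 H2.
    by move: (le_lt_trans H1 H2); rewrite ltxx.
  - rewrite /setC /= => H1.
    by rewrite leNgt; apply/negP.
rewrite /pp E probability_setC; last exact: msgt.
rewrite (PE (msgt 0 a)) /G.
by [].
Qed.

End Indep.


Definition g1 (n : nat) : int := (n.+1)%:Z.
Definition g2 (n : nat) : int := - (n%:Z).
Lemma g1inj : injective g1. Proof. by move=> m n; rewrite /g1 => H; lia. Qed.
Lemma g2inj : injective g2. Proof. by move=> m n; rewrite /g2 => H; lia. Qed.

Lemma bigU_mem (F : nat -> set Omega) N w :
  (\big[setU/set0]_(n < N) F n) w -> exists n, F n w.
Proof.
elim: N => [|N IH]; first by rewrite big_ord0.
by rewrite big_ord_recr /= => -[/IH //|H]; exists N.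
Qed.

Lemma subB (h : R -> R) t N b :
  ell (Ltail sigma) t < b -> t * h t ^+ 2 / rfun (Ltail sigma) t <= b ->
  (\big[setU/set0]_(n < N) Fn g1 (ell (Ltail sigma) t) b n) `&`
  (\big[setU/set0]_(n < N) Fn g2 (ell (Ltail sigma) t) b n) `<=` eventB sigma h t.
Proof.
move=> ab cb w [/bigU_mem [n1 H1] /bigU_mem [n2 H2]].
move: H1 => /(Fn_mem g1inj) [H1a H1b].
move: H2 => /(Fn_mem g2inj) [H2a H2b].
exists (g1 n1), (g2 n2); split; [|split].
- split; first by rewrite /g1; lia.
  split; first exact: lt_trans H1a.
  move=> y y0 yz.
  have [i -> lt] : exists2 i : nat, y = (i.+1)%:Z & (i < n1)%N.
    by exists (absz y).-1; move: yz; rewrite /g1 => yz; lia.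
  exact: H1b.
- split; first by rewrite /g2; lia.
  split; first exact: lt_trans H2a.
  move=> y y0 yz.
  have [i -> lt] : exists2 i : nat, y = - (i%:Z) & (i < n2)%N.
    by exists (absz y); move: y0; rewrite /g2 => y0; lia.
  exact: H2b.
- by rewrite lt_min (le_lt_trans cb H1a) (le_lt_trans cb H2a).
Qed.

Lemma mforall (Q : int -> set Omega) : (forall y, measurable (Q y)) ->
  measurable [set w | forall y, Q y w].
Proof.
move=> mQ.
have -> : [set w | forall y, Q y w] = \bigcap_(k : nat) (Q k%:Z `&` Q (- (k%:Z))).
  apply/seteqP; split => w /=.
  - by move=> H k _; split; apply: H.
  - move=> H y; case: y => k; first by have [] := H k I.
    by rewrite NegzE; have [] := H k.+1 I.
by apply: bigcapT_measurable => k; apply: measurableI.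
Qed.

Lemma mexists (Q : int -> set Omega) : (forall y, measurable (Q y)) ->
  measurable [set w | exists y, Q y w].
Proof.
move=> mQ.
have -> : [set w | exists y, Q y w] = \bigcup_(k : nat) (Q k%:Z `|` Q (- (k%:Z))).
  apply/seteqP; split => w /=.
  - move=> [y]; case: y => k H; first by exists k => //; left.
    by exists k.+1 => //; right; rewrite -NegzE.
  - by move=> [k _ [H|H]]; eexists; exact: H.
by apply: bigcupT_measurable => k; apply: measurableU.
Qed.

Lemma mprop (Pr : Prop) (A : set Omega) : measurable A ->
  measurable [set w | Pr /\ A w].
Proof.
move=> mA; case: (pselect Pr) => H.
- have -> : [set w | Pr /\ A w] = A by apply/seteqP; split => w /= => [[]|] //.
  exact: mA.
- have -> : [set w | Pr /\ A w] = set0 by apply/seteqP; split => w /= => [[]|] //.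
  exact: measurable0.
Qed.

Lemma mimpl (Pr : Prop) (A : set Omega) : measurable A ->
  measurable [set w | Pr -> A w].
Proof.
move=> mA; case: (pselect Pr) => H.
- have -> : [set w | Pr -> A w] = A by apply/seteqP; split => w /=; [apply| move=> ?].
  exact: mA.
- have -> : [set w | Pr -> A w] = setT by apply/seteqP; split => w //=.
  exact: measurableT.
Qed.

Lemma mB (h : R -> R) t : measurable (eventB sigma h t).
Proof.
rewrite /eventB; apply: mexists => z1; apply: mexists => z2.
set c := t * h t ^+ 2 / rfun (Ltail sigma) t.
set e := ell (Ltail sigma) t.
apply: measurableI; [|apply: measurableI].
- apply: mprop; apply: measurableI; first exact: msgt.
  apply: mforall => y; apply: mimpl; apply: mimpl; exact: msle.
- apply: mprop; apply: measurableI; first exact: msgt.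
  apply: mforall => y; apply: mimpl; apply: mimpl; exact: msle.
- have H : measurable ([set w | c < sigma z1 w] `&` [set w | c < sigma z2 w]).
    by apply: measurableI; exact: msgt.
  have E : [set w | c < sigma z1 w] `&` [set w | c < sigma z2 w] =
     [set w | c < Num.min (sigma z1 w) (sigma z2 w)].
    by apply/seteqP; split => w /=; rewrite lt_min => /andP.
  by rewrite E in H; exact: H.
Qed.

Lemma Pinter A B : measurable A -> measurable B ->
  fine (P A) + fine (P B) - 1 <= fine (P (A `&` B)).
Proof.
move=> mA mB.
have E0 : P (A `|` B) = (P A + P B - P (A `&` B))%E.
  apply: measureUfinr => //; exact: (le_lt_trans (probability_le1 _ mB) (ltry _)).
move: E0.
rewrite (PE (measurableU _ _ mA mB)) (PE mA) (PE mB) (PE (measurableI _ _ mA mB)).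
move=> E0; rewrite /=.
have E : fine (P (A `|` B)) = fine (P A) + fine (P B) - fine (P (A `&` B)).
  by apply: EFin_inj; exact: E0.
have := Ple1 (measurableU _ _ mA mB); lra.
Qed.
End S.

Lemma geom (R : realType) (p : R) N : \sum_(n < N) p ^+ n * (1 - p) = 1 - p ^+ N.
Proof.
elim: N => [|N IH]; first by rewrite big_ord0 expr0 subrr.
by rewrite big_ord_recr /= IH exprSr; ring.
Qed.

Theorem proposition3p10 (d : measure_display) (Omega : measurableType d)
  (R : realType) (P : probability Omega R) (sigma : int -> {RV P >-> R})
  (h : R -> R) :
  mutually_independent sigma ->
  identically_distributed sigma ->
  pos_as sigma ->
  slowly_varying (Ltail sigma) ->
  h @ +oo --> +oo ->
  (fun t => h t ^+ 2 / rfun (Ltail sigma) t) @ +oo --> (0 : R) ->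
  (\forall t \near +oo,
      Ltail sigma (ell (Ltail sigma) t / h t ^+ 3)
        > Ltail sigma (ell (Ltail sigma) t) * (1 - (h t)^-1) /\
      Ltail sigma (ell (Ltail sigma) t * h t ^+ 3)
        < Ltail sigma (ell (Ltail sigma) t) * (1 + (h t)^-1)) ->
  (fun t => fine (P (eventB sigma h t))) @ +oo --> (1 : R).
Proof.
move=> indep ident pos sv hoo hr hnear.
apply/cvgrPdist_le => eps eps0.
have H1 := (@cvgryPgt R R (pinfty_nbhs R) _ h).1 hoo (Num.max 3 (4 / eps)).
have H2 := nbhs_pinfty_gt (num_real (0 : R)).
near=> t.
have [_ HL2] : Ltail sigma (ell (Ltail sigma) t / h t ^+ 3)
        > Ltail sigma (ell (Ltail sigma) t) * (1 - (h t)^-1) /\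
      Ltail sigma (ell (Ltail sigma) t * h t ^+ 3)
        < Ltail sigma (ell (Ltail sigma) t) * (1 + (h t)^-1).
  by near: t; apply: hnear.
have ht : Num.max 3 (4 / eps) < h t by near: t; apply: H1.
have t0 : 0 < t by near: t; apply: H2.
move: ht; rewrite gt_max => /andP [h3 h4].
set L := Ltail sigma in HL2 *.
set a := ell L t in HL2 *.
set H := h t in HL2 h3 h4 *.
set k := H^-1 in HL2.
have hpos : 0 < H by lra.
have kh : k * H = 1 by rewrite mulVf // gt_eqF.
have k0 : 0 < k by rewrite invr_gt0.
have k13 : k < 1 / 3 by nra.
have keps : k <= eps / 4.
  rewrite /k -(invf_div 4 eps) lef_pV2 ?posrE ?divr_gt0 //; exact: ltW.
have a0 : 0 < a := ell_gt0 sv t0.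
have hsq : H ^+ 2 = H * H by rewrite expr2.
have hcu : H ^+ 3 = H * (H * H) by rewrite !exprS expr0 mulr1.
set b := a * H ^+ 3.
have ab : a < b.
  rewrite /b hcu ltr_pMr //.
  have : 3 < H * H by nra.
  nra.
have ab2 : 2 * a <= b.
  rewrite /b hcu.
  have : 3 < H * H by nra.
  have : 9 < H * (H * H) by nra.
  nra.
have La0 := L_pos sv a.
have cb : t * H ^+ 2 / rfun L t <= b.
  rewrite /rfun -/a ler_pdivrMr //.
  have t2a := ell_above sv t0 (_ : a < 2 * a).
  have t2a' : t <= 2 * a * L (2 * a) by apply: t2a; lra.
  clear t2a; rename t2a' into t2a.
  have L2b : L (2 * a) <= L b by apply: L_mono.
  have L2a0 := L_pos sv (2 * a).
  set X := a * L a.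
  have X0 : 0 < X by rewrite /X mulr_gt0.
  have e1 : t <= 2 * X * (1 + k).
    have : 2 * a * L (2 * a) <= 2 * a * (L a * (1 + k)).
      by apply: ler_wpM2l; lra.
    have : 2 * a * (L a * (1 + k)) = 2 * X * (1 + k) by rewrite /X; ring.
    lra.
  have e2 : t * H ^+ 2 <= 2 * X * (1 + k) * H ^+ 2.
    by apply: ler_wpM2r => //; rewrite hsq; nra.
  have e3 : 2 * X * (1 + k) * H ^+ 2 = 2 * X * (H * H + H).
    rewrite hsq.
    have E : (1 + k) * (H * H) = H * H + H by rewrite mulrDl mul1r mulrA kh mul1r.
    by rewrite -mulrA E.
  have e4 : 2 * X * (H * H + H) <= X * (H * (H * H)).
    have : 0 <= H * H - 2 * H - 2 by nra.
    have : 0 <= H * (H * H - 2 * H - 2) by nra.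
    nra.
  have e5 : b * L a = X * (H * (H * H)) by rewrite /b hcu /X; ring.
  lra.
set q := G sigma a.
set r := G sigma b.
have q0 : 0 < q := G_pos sv a.
have r0 : 0 < r := G_pos sv b.
have q1 : q <= 1 by apply: Ple1; exact: msgt.
have r1 : r <= 1 by apply: Ple1; exact: msgt.
have rq : q * (1 - k) <= r.
  move: HL2; rewrite /L !LtailE -/q -[a * H ^+ 3]/b -/r => HL2.
  have : r^-1 * (q * r) < q^-1 * (1 + k) * (q * r).
    by rewrite ltr_pM2r // mulr_gt0.
  have -> : r^-1 * (q * r) = q by field; rewrite gt_eqF.
  have -> : q^-1 * (1 + k) * (q * r) = (1 + k) * r by field; rewrite gt_eqF.
  move=> qr; nra.
set p := pp sigma a.
have qE : q = 1 - p by rewrite /p ppE -/q; ring.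
have p0 : 0 <= p by exact: Pge0.
have p1 : p < 1 by lra.
have [N HN] : exists N, p ^+ N <= eps / 4.
  have := cvg_expr (_ : `|p| < 1).
  rewrite ger0_norm // => /(_ p1) /cvgrPdist_le /(_ (eps / 4)) /(_ (divr_gt0 eps0 _)).
  move=> /(_ (ltr0Sn _ 3)) /filter_ex [N HN]; exists N.
  by move: HN; rewrite sub0r normrN ger0_norm // exprn_ge0.
have pN0 : 0 <= p ^+ N := exprn_ge0 N p0.
set U1 := \big[setU/set0]_(n < N) Fn sigma g1 a b n.
set U2 := \big[setU/set0]_(n < N) Fn sigma g2 a b n.
have mU1 : measurable U1 by apply: bigsetU_measurable => n _; exact: mFn.
have mU2 : measurable U2 by apply: bigsetU_measurable => n _; exact: mFn.
have sumb : (1 - p ^+ N) * (1 - k) <= \sum_(n < N) p ^+ n * r.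
  have <- : \sum_(n < N) p ^+ n * (q * (1 - k)) = (1 - p ^+ N) * (1 - k).
    rewrite -(geom p N) mulr_suml; apply: eq_bigr => n _; rewrite qE; ring.
  apply: ler_sum => n _; apply: ler_wpM2l => //; exact: exprn_ge0.
have PU1 : fine (P U1) = \sum_(n < N) p ^+ n * r.
  by rewrite /U1 (PU indep ident g1inj N ab).
have PU2 : fine (P U2) = \sum_(n < N) p ^+ n * r.
  by rewrite /U2 (PU indep ident g2inj N ab).
have PI := Pinter P mU1 mU2.
have PB : fine (P (U1 `&` U2)) <= fine (P (eventB sigma h t)).
  apply: Ple; [exact: measurableI | exact: mB | exact: subB].
have PB1 : fine (P (eventB sigma h t)) <= 1 by apply: Ple1; exact: mB.
have : 1 - eps <= fine (P (eventB sigma h t)).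
  have [eps1|eps1] := lerP 1 eps.
    by have := Pge0 P (eventB sigma h t); lra.
  have : (1 - eps / 4) * (1 - eps / 4) <= (1 - p ^+ N) * (1 - k).
    apply: ler_pM; lra.
  have : 0 <= eps * eps by nra.
  rewrite PU1 PU2 in PI.
  nra.
move=> HB; rewrite ger0_norm; lra.
Unshelve. all: by end_near.
Qed.
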